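(* Let $G$ be a connected graph of order $n\ge 4$ such that $px_k(G)=2$ for each integer $k$ with $3\leq k\leq n-1$. Then $px_n(G)=2$ if $G$ is traceable (has a Hamilton path), and $px_n(G)=3$ otherwise.
   Context: All graphs are finite, simple, undirected and connected. An edge-coloring of a graph assigns a color to each edge (adjacent edges may receive the same color). A tree in an edge-colored graph is proper if any two adjacent edges of the tree receive different colors. For $S\subseteq V(G)$, an $S$-tree is a subgraph of $G$ that is a tree containing all vertices of $S$. For a connected graph $G$ of order $n$ and an integer $k$ with $2\le k\le n$, an edge-coloring of $G$ is a $k$-proper coloring if for every set $S$ of $k$ vertices of $G$ there exists a proper $S$-tree in $G$. The $k$-proper index $px_k(G)$ is the minimum number of colors used in a $k$-proper coloring of $G$. *)

(* Defs.v *)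
From mathcomp Require Import all_boot.
Set Implicit Arguments. Unset Strict Implicit. Unset Printing Implicit Defensive.

Definition simple_graph (T : finType) (e : rel T) : Prop :=
  symmetric e /\ irreflexive e.

Definition graph_connected (T : finType) (e : rel T) : Prop :=
  forall x y : T, connect e x y.

Definition edge_coloring (T : finType) (e : rel T) (c : T -> T -> nat) : Prop :=
  forall x y, e x y -> c x y = c y x.

Definition num_colors (T : finType) (e : rel T) (c : T -> T -> nat) : nat :=
  size (undup [seq c x y | x <- enum T, y <- [seq z <- enum T | e x z]]).

Definition subgraph (T : finType) (e : rel T) (V : {set T}) (F : rel T) : Prop :=
  symmetric F /\ (forall x y, F x y -> e x y /\ x \in V /\ y \in V).

Definition is_tree (T : finType) (V : {set T}) (F : rel T) : Prop :=
  (V != set0) /\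
  (forall x y, x \in V -> y \in V -> connect F x y) /\
  (forall s : seq T, ~ [&& cycle F s, uniq s & 2 < size s]).

Definition proper_sub (T : finType) (F : rel T) (c : T -> T -> nat) : Prop :=
  forall x y z, F x y -> F y z -> x != z -> c x y != c y z.

Definition k_proper_coloring (T : finType) (e : rel T) (k : nat)
    (c : T -> T -> nat) : Prop :=
  edge_coloring e c /\
  forall S : {set T}, #|S| = k ->
    exists (V : {set T}) (F : rel T),
      [/\ S \subset V, subgraph e V F, is_tree V F & proper_sub F c].

Definition proper_index_is (T : finType) (e : rel T) (k m : nat) : Prop :=
  (exists c, k_proper_coloring e k c /\ num_colors e c = m) /\
  (forall c, k_proper_coloring e k c -> m <= num_colors e c).

Definition traceable (T : finType) (e : rel T) : Prop :=
  exists (x : T) (p : seq T), [/\ path e x p, uniq (x :: p) & size (x :: p) = #|T|].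

(* Main.v *)
Require Import Defs.
From mathcomp Require Import all_boot zify.
Set Implicit Arguments. Unset Strict Implicit. Unset Printing Implicit Defensive.

Definition colors (T : finType) (e : rel T) (c : T -> T -> nat) :=
  undup [seq c x y | x <- enum T, y <- [seq z <- enum T | e x z]].

Lemma mem_colors (T : finType) (e : rel T) c x y : e x y -> c x y \in colors e c.
Proof.
move=> exy; rewrite mem_undup; apply/allpairsPdep; exists x, y.
by rewrite mem_enum mem_filter mem_enum exy.
Qed.

Lemma colors_mem (T : finType) (e : rel T) c k : k \in colors e c ->
  exists x y, e x y /\ k = c x y.
Proof.
rewrite mem_undup => /allpairsPdep [x [y [_]]]; rewrite mem_filter => /andP [exy _] ->.
by exists x, y.
Qed.

Lemma num_colorsE (T : finType) (e : rel T) c : num_colors e c = size (colors e c).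
Proof. by []. Qed.

Lemma three_colors (T : finType) (e : rel T) c a b d :
  a \in colors e c -> b \in colors e c -> d \in colors e c ->
  a != b -> a != d -> b != d -> 3 <= num_colors e c.
Proof.
move=> ha hb hd ab ad bd; rewrite num_colorsE.
have : size [:: a; b; d] <= size (colors e c).
  apply: uniq_leq_size; first by rewrite /= !inE negb_or ab ad bd.
  by move=> z; rewrite !inE => /or3P [] /eqP ->.
by [].
Qed.

Lemma two_colors (T : finType) (e : rel T) c a b :
  a \in colors e c -> b \in colors e c -> a != b -> 2 <= num_colors e c.
Proof.
move=> ha hb ab; rewrite num_colorsE.
have : size [:: a; b] <= size (colors e c).
  apply: uniq_leq_size; first by rewrite /= !inE ab.
  by move=> z; rewrite !inE => /orP [] /eqP ->.
by [].
Qed.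

Lemma deg2 (T : finType) (e F : rel T) (c : T -> T -> nat) (w a b d : T) :
  symmetric F -> (forall x y, F x y -> e x y) -> edge_coloring e c ->
  Defs.proper_sub F c -> num_colors e c <= 2 ->
  F w a -> F w b -> F w d -> a != b -> a != d -> b != d -> False.
Proof.
move=> sF Fe ec pr nc wa wb wd ab ad bd.
have h : forall x y, F w x -> F w y -> x != y -> c w x != c w y.
  move=> x y wx wy xy; rewrite (ec w x) ?Fe //; apply: pr => //; by rewrite sF.
have := three_colors (mem_colors c (Fe _ _ wa)) (mem_colors c (Fe _ _ wb))
  (mem_colors c (Fe _ _ wd)) (h _ _ wa wb ab) (h _ _ wa wd ad) (h _ _ wb wd bd).
by move=> /leq_trans /(_ nc).
Qed.

Lemma size_lt_card (T : finType) (q : seq T) t : uniq q -> t \notin q -> size q < #|T|.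
Proof.
move=> uq tq; have := @uniq_leq_size _ (t :: q) (enum T).
rewrite /= tq uq cardE => /(_ isT); apply => z _; by rewrite mem_enum.
Qed.

Lemma ham_ext (T : finType) (e F : rel T) c :
  symmetric F -> (forall x y, F x y -> e x y) -> edge_coloring e c ->
  Defs.proper_sub F c -> num_colors e c <= 2 -> (forall x y, connect F x y) ->
  forall m x p, #|T| - size (x :: p) <= m -> path F x p -> uniq (x :: p) ->
  exists x' p', [/\ path F x' p', uniq (x' :: p') & forall t, t \in x' :: p'].
Proof.
move=> sF Fe ec pr nc conF; elim=> [|m IH] x p.
  move=> hm pth uq; exists x, p; split=> // t; apply/negPn/negP => tq.
  have := size_lt_card uq tq; rewrite -subn_gt0; by move: hm; case: (_ - _).
move=> hm pth uq.
have [cov|] := boolP [forall t, t \in x :: p].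
  by exists x, p; split=> // t; move/forallP: cov.
rewrite negb_forall => /existsP [t tq].
have ltT := size_lt_card uq tq.
have [/existsP [y /existsP [z /and3P [yq zq Fyz]]]|nob] :=
  boolP [exists y, exists z, [&& y \in x :: p, z \notin x :: p & F y z]].
- have [ylast|ynl] := eqVneq y (last x p).
    apply: (IH x (rcons p z)).
    + move: hm ltT; rewrite /= size_rcons; lia.
    + by rewrite rcons_path pth -ylast.
    + by rewrite -rcons_cons rcons_uniq zq.
  have [yx|ynx] := eqVneq y x.
    apply: (IH z (x :: p)).
    + move: hm ltT; rewrite /=; lia.
    + by rewrite /= pth andbT sF -yx.
    + by rewrite /= zq.
  have yp : y \in p by move: yq; rewrite inE (negPf ynx).
  case/splitPr: yp pth uq ynl zq => p1 p2 pth uq ynl zq.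
  case: p2 pth uq ynl zq => [|b p2] pth uq ynl zq.
    by rewrite last_cat /= eqxx in ynl.
  rewrite cat_path /= in pth; case/and3P: pth => _ ay /andP [yb _].
  exfalso; apply: (@deg2 _ e F c y (last x p1) b z) => //.
  + by rewrite sF.
  + move: uq; rewrite -cat_cons cat_uniq /= => /and3P [_ /norP [_ /norP [/negP hb _]] _].
    apply/eqP => eab; apply: hb; rewrite -eab; exact: mem_last.
  + apply/eqP => eaz; move: zq; rewrite -cat_cons mem_cat -eaz mem_last //.
  + apply/eqP => ebz; move: zq; rewrite -cat_cons mem_cat -ebz !inE eqxx; by rewrite !orbT.
- exfalso; move/negP: tq; apply.
  case/connectP: (conF x t) => s ps ->.
  have : x \in x :: p by rewrite inE eqxx.
  move: nob; set q := x :: p => nob.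
  elim: s (x) ps => [|s0 s IHs] y0 //= /andP [F0 ps] y0q.
  apply: (IHs s0 ps); apply/negPn/negP => s0q.
  move/existsP: nob; apply; exists y0; apply/existsP; exists s0; by rewrite y0q s0q F0.
Qed.

Lemma ham_tree (T : finType) (e : rel T) c :
  4 <= #|T| -> k_proper_coloring e #|T| c -> num_colors e c <= 2 ->
  exists x p, [/\ path e x p, uniq (x :: p), size (x :: p) = #|T| &
     2 <= num_colors e c].
Proof.
move=> n4 [ec kp] nc.
have [V [F [sV [sF FV] [_ [conV _] pr]]]] := kp setT (cardsT T).
have inV : forall x, x \in V by move=> x; apply: (subsetP sV); rewrite inE.
have Fe : forall x y, F x y -> e x y by move=> x y /FV [].
have x0 : T.
  by move: n4; rewrite cardE; case: (enum T) => [|a _] //.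
have [x [p [pth uq cov]]] := ham_ext sF Fe ec pr nc
   (fun x y => conV x y (inV x) (inV y)) (m:=#|T|) (x:=x0) (p:=[::]) (leq_subr _ _) isT isT.
have sz : size (x :: p) = #|T|.
  rewrite -(card_uniqP uq); apply: eq_card => t; by rewrite cov.
exists x, p; split => //; first exact: sub_path pth.
move: sz pth uq n4; case: p {cov} => [|b [|d p]] //= sz; rewrite -sz // => /and3P [Fxb Fbd _].
rewrite !inE => /andP [/norP [_ /norP [xd _]] _] _.

exact: (two_colors (mem_colors c (Fe _ _ Fxb)) (mem_colors c (Fe _ _ Fbd)) (pr _ _ _ Fxb Fbd xd)).
Qed.

Lemma lower2 (T : finType) (e : rel T) c :
  4 <= #|T| -> k_proper_coloring e #|T| c -> 2 <= num_colors e c.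
Proof.
move=> n4 kp; case: (leqP (num_colors e c) 2) => [nc|]; last by move/ltnW.
by have [x [p [_ _ _ ->]]] := ham_tree n4 kp nc.
Qed.

Lemma lower3 (T : finType) (e : rel T) c :
  4 <= #|T| -> ~ traceable e -> k_proper_coloring e #|T| c -> 3 <= num_colors e c.
Proof.
move=> n4 nt kp; case: (leqP (num_colors e c) 2) => [nc|] //.
have [x [p [pth uq sz _]]] := ham_tree n4 kp nc.
by case: nt; exists x, p.
Qed.

Lemma cycle_nbrs (T : eqType) (F : rel T) (s : seq T) (w : T) :
  cycle F s -> uniq s -> 2 < size s -> w \in s ->
  exists a b, [/\ a != b, a \in s, b \in s, F w a & F b w].
Proof.
move=> cs us ss ws; case/rot_to: ws => i s' hr.
have cs' : cycle F (w :: s') by rewrite -hr rot_cycle.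
have us' : uniq (w :: s') by rewrite -hr rot_uniq.
have ss' : 2 < size (w :: s') by rewrite -hr size_rot.
have ms : forall x, x \in w :: s' -> x \in s by move=> x; rewrite -hr mem_rot.
clear hr; case: s' cs' us' ss' ms => [|a t] //; case/lastP: t => [|t' b] //= cs' us' _ ms.
exists a, b; split.
- case/and3P: us' => _ /negP ha _; apply/eqP => ab; apply: ha; by rewrite ab mem_rcons inE eqxx.
- by apply: ms; rewrite !inE eqxx orbT.
- by apply: ms; rewrite !inE mem_rcons inE eqxx !orbT.
- by case/andP: cs'.
- by move: cs' => /andP [_]; rewrite rcons_path => /andP [_]; rewrite last_rcons.
Qed.


Lemma ham_covers (T : finType) (q : seq T) : uniq q -> size q = #|T| -> forall t, t \in q.
Proof.
move=> uq sq t; apply/negPn/negP => tq; have := size_lt_card uq tq; by rewrite sq ltnn.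
Qed.

Definition pF (T : eqType) (q : seq T) : rel T :=
  fun x y => (index y q == (index x q).+1) || (index x q == (index y q).+1).
Definition pc (T : eqType) (q : seq T) : T -> T -> nat :=
  fun x y => ((index x q + index y q) %/ 2) %% 2.

Lemma path_coloring (T : finType) (e : rel T) (x : T) (p : seq T) :
  simple_graph e -> path e x p -> uniq (x :: p) -> size (x :: p) = #|T| ->
  k_proper_coloring e #|T| (pc (x :: p)) /\ num_colors e (pc (x :: p)) <= 2.
Proof.
move=> [se ie] pth uq sz; set q := x :: p.
have cov := ham_covers uq sz.
have lt : forall t, index t q < size q by move=> t; rewrite index_mem.
have Fe : forall a b, pF q a b -> e a b.
  have h : forall a b, index b q = (index a q).+1 -> e a b.
    move=> a b hab; have hi : index a q < size p.
      by have := lt b; rewrite hab /= ltnS.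
    move/(pathP x): pth => /(_ _ hi); rewrite (nth_index _ (cov a)).
    have -> : nth x p (index a q) = nth x q (index b q) by rewrite hab.
    by rewrite (nth_index _ (cov b)).
  move=> a b /orP [] /eqP hab; first exact: h.
  rewrite se; exact: h.
split; last first.
  rewrite num_colorsE; have -> : 2 = size [:: 0; 1] by [].
  apply: uniq_leq_size; first exact: undup_uniq.
  move=> k /colors_mem [a [b [_ ->]]]; rewrite /pc !inE.
  by case: (_ %% 2) (ltn_pmod ((index a q + index b q) %/ 2) (isT : 0 < 2)) => [|[|]].
split.
  move=> a b _; by rewrite /pc addnC.
move=> S _; exists setT, (pF q); split.
- exact: subsetT.
- split; first by move=> a b; rewrite /pF orbC.
  by move=> a b /Fe; rewrite !inE.
- split; first by apply/set0Pn; exists x; rewrite inE.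
  split.
    have cx : forall i, i < size q -> connect (pF q) x (nth x q i).
      elim=> [|i IH] hi; first exact: connect0.
      apply: connect_trans (IH (ltnW hi)) (connect1 _).
      by rewrite /pF !index_uniq // ?eqxx // ltnW.
    have cxt : forall t, connect (pF q) x t.
      by move=> t; rewrite -(nth_index x (cov t)); apply: cx.
    move=> a b _ _; apply: connect_trans (cxt b).
    by rewrite (sym_connect_sym (fun a b => orbC _ _)) cxt.
  move=> s /and3P [cs us ss].
  have [|w ws wmax] := @eq_bigmax_cond _ (mem s) (fun t => index t q).
    by rewrite (card_uniqP us); move: ss; lia.
  have [a [b [ab aS bS Fwa Fbw]]] := cycle_nbrs cs us ss ws.
  have la := @leq_bigmax_cond _ (mem s) (fun t => index t q) a aS.
  have lb := @leq_bigmax_cond _ (mem s) (fun t => index t q) b bS.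
  rewrite wmax in la lb; move: Fwa Fbw; rewrite /pF => h1 h2.
  have : index a q = index b q by move: h1 h2 la lb; lia.
  by move/(index_inj x (cov a) (cov b))/eqP; rewrite (negPf ab).
- move=> a b d; rewrite /pF /pc => h1 h2 ad.
  have : index a q != index d q.
    by apply: contra ad => /eqP /(index_inj x (cov a) (cov d)) ->.
  move: h1 h2; lia.
Qed.

Definition isuv (T : eqType) (u v : T) : rel T :=
  fun x y => ((x == u) && (y == v)) || ((x == v) && (y == u)).
Definition Fext (T : eqType) (F : rel T) (u v : T) : rel T :=
  fun x y => F x y || isuv u v x y.
Definition cext (T : finType) (e : rel T) (c : T -> T -> nat) (u v : T) :=
  fun x y => if isuv u v x y then (\max_(k <- colors e c) k).+1 else c x y.

Lemma leaf_ext (T : finType) (e : rel T) (c : T -> T -> nat) (V : {set T}) F (u v : T) :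
  simple_graph e -> edge_coloring e c -> [set~ v] \subset V -> v \notin V ->
  subgraph e V F -> is_tree V F -> Defs.proper_sub F c -> e v u ->
  k_proper_coloring e #|T| (cext e c u v) /\
  num_colors e (cext e c u v) <= (num_colors e c).+1.
Proof.
move=> [se ie] ec sV vV [sF FV] [_ [conV acyc]] pr evu.
have uv : u != v by apply: contraTneq evu => ->; rewrite ie.
have inV : forall x, x != v -> x \in V.
  by move=> x xv; apply: (subsetP sV); rewrite !inE.
have Fe : forall x y, F x y -> e x y by move=> x y /FV [].
have Fv : forall x, F v x = false.
  by move=> x; apply/negP => /FV [_ [hv _]]; rewrite hv in vV.
have Fv' : forall x, F x v = false by move=> x; rewrite sF.
have fresh : forall x y, e x y -> c x y < (\max_(k <- colors e c) k).+1.
  move=> x y exy; rewrite ltnS.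
  exact: (@leq_bigmax_seq _ (colors e c) xpredT id _ (mem_colors c exy)).
split; last first.
  rewrite !num_colorsE.
  apply: (@uniq_leq_size _ _ ((\max_(k <- colors e c) k).+1 :: colors e c)); first exact: undup_uniq.
  move=> k /colors_mem [x [y [exy ->]]]; rewrite /cext inE.
  by case: (isuv u v x y); rewrite ?eqxx //= mem_colors ?orbT.
split.
  move=> x y exy; rewrite /cext /isuv (ec x y exy).
  by case: (x == u); case: (y == v); case: (x == v); case: (y == u).
move=> S _; exists setT, (Fext F u v); split.
- exact: subsetT.
- split.
    by move=> x y; rewrite /Fext sF /isuv; case: (x == u); case: (y == v); case: (x == v); case: (y == u).
  move=> x y; rewrite !inE /Fext /isuv => /orP [/Fe //|].
  by case/orP => /andP [/eqP -> /eqP ->] //; rewrite se.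
- split; first by apply/set0Pn; exists u; rewrite inE.
  have cu : forall x, connect (Fext F u v) x u.
    move=> x; have [->|xv] := eqVneq x v.
      by apply: connect1; rewrite /Fext /isuv !eqxx /= !orbT.
    apply: (connect_sub (e := F)); last exact: conV (inV _ xv) (inV _ uv).
    by move=> a b Fab; apply: connect1; rewrite /Fext Fab.
  have symF : symmetric (Fext F u v).
    by move=> x y; rewrite /Fext sF /isuv; case: (x == u); case: (y == v); case: (x == v); case: (y == u).
  split.
    move=> a b _ _; apply: connect_trans (cu a) _.
    by rewrite (sym_connect_sym symF) cu.
  move=> s /and3P [cs us ss].
  have [vs|vs] := boolP (v \in s).
    have [a [b [ab _ _ Fva Fbv]]] := cycle_nbrs cs us ss vs.
    move: Fva Fbv; rewrite /Fext /isuv Fv Fv' eqxx eq_sym (negPf uv) /= ?andbT ?andbF ?orbF.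
    by move=> /eqP ea /eqP eb; rewrite ea eb eqxx in ab.
  apply: (acyc s); rewrite us ss andbT.
  case: s cs us ss vs => [|x0 s] // cs _ _ vs.
  have hsub : {in x0 :: s &, subrel (Fext F u v) F}.
    move=> a b ha hb; rewrite /Fext /isuv.
    have av : a != v by apply: contraNneq vs => <-.
    have bv : b != v by apply: contraNneq vs => <-.
    by rewrite (negPf av) (negPf bv) !andbF orbF.
  have hall : all [in x0 :: s] (x0 :: rcons s x0).
    apply/allP => z; rewrite inE mem_rcons inE => h; rewrite /=; by case/or3P: h => ->; rewrite ?orbT.
  by rewrite andbT; exact: (sub_in_path hsub hall cs).
- move=> x y z; rewrite /Fext /cext => h1 h2 xz.
  case hxy: (isuv u v x y); case hyz: (isuv u v y z).
  + move: hxy hyz xz; rewrite /isuv.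
    by case/orP => /andP [/eqP -> /eqP ->]; case/orP => /andP [/eqP h /eqP ->];
      rewrite ?eqxx // ?h ?eqxx //; move: uv; rewrite ?h eqxx.
  + rewrite hyz orbF in h2; rewrite neq_ltn fresh ?orbT //; exact: Fe.
  + rewrite hxy orbF in h1; rewrite neq_ltn fresh //; exact: Fe.
  + rewrite hxy orbF in h1; rewrite hyz orbF in h2; exact: pr.
Qed.

Theorem mainTheorem6 (T : finType) (e : rel T) :
  simple_graph e -> graph_connected e -> 4 <= #|T| ->
  (forall k, 3 <= k <= #|T|.-1 -> proper_index_is e k 2) ->
  (traceable e -> proper_index_is e #|T| 2) /\
  (~ traceable e -> proper_index_is e #|T| 3).
Proof.
move=> sg con n4 hk.
have [[c0 [kp0 nc0]] _] := hk #|T|.-1 ltac:(move: n4; lia).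
split.
  move=> [x [p [pth uq sz]]].
  have [kp nc] := path_coloring sg pth uq sz.
  split; last by move=> c kp'; exact: lower2 n4 kp'.
  exists (pc (x :: p)); split => //; apply/eqP; rewrite eqn_leq nc.
  exact: lower2 n4 kp.
move=> nt; split; last by move=> c kp; exact: lower3 n4 nt kp.
have v : T by move: n4; rewrite cardE; case: (enum T) => [|a _] //.
have [V [F [sV sg' tr pr]]] := kp0.2 [set~ v] (cardsC1 v).
have [vV|vV] := boolP (v \in V).
  have kpn : k_proper_coloring e #|T| c0.
    split; first exact: kp0.1.
    move=> S _; exists V, F; split => //; apply/subsetP => x _.
    have [->//|xv] := eqVneq x v; apply: (subsetP sV); by rewrite !inE.
  by have := lower3 n4 nt kpn; rewrite nc0.
have [y yv] : exists y, y != v.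
  have : 0 < #|[set~ v]| by rewrite cardsC1; move: n4; lia.
  by case/card_gt0P => y; rewrite !inE => yv; exists y.
case/connectP: (con v y) => s ps ey.
case: s ps ey => [|u s] /=; first by move=> _ eyv; rewrite eyv eqxx in yv.
move=> /andP [evu _] _.
have [kp nc] := leaf_ext sg kp0.1 sV vV sg' tr pr evu.
exists (cext e c0 u v); split => //; apply/eqP; rewrite eqn_leq lower3 // andbT.
by rewrite nc0 in nc.
Qed.
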